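(* Let $q$ be a prime power, $r\geq1$, $\delta\geq2$ integers and $R=r+\delta-1$. Let $a_1,\dots,a_\ell\in\mathbb{F}_q^*$ be distinct and $h=\prod_{i=1}^{\ell}(T^R-a_i)$. Let $P\in\mathbb{F}_q[T]$ be monic irreducible of degree $m$ with $P\equiv1\pmod h$, let $\alpha\in\mathbb{F}_{q^m}$ be a root of $P$, and let $\bar\phi$ be the Drinfeld module over $\mathbb{F}_{q^m}$ with $\bar\phi_T=\alpha+\tau$. Let $s\geq0$ be an integer and let \[f=\sum_{k=0}^{s}g_k(\tau)\,\bar\phi_{T^R}^{\,k}\] be a nonzero element of $\mathbb{F}_{q^m}\{\tau\}$ with each $g_k\in\mathbb{F}_{q^m}\{\tau\}_{\leq r-1}$. If $s+1\leq\ell$, then the $\mathbb{F}_q$-linear map $x\mapsto f(x)$ (where $\tau^i$ acts as $x\mapsto x^{q^i}$) restricted to $\bar\phi[h]$ is not the zero map.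
   Context: $\mathbb{F}_{q^m}\{\tau\}$ is the twisted polynomial ring with $(a\tau^i)(b\tau^j)=ab^{q^i}\tau^{i+j}$; $\mathbb{F}_{q^m}\{\tau\}_{\leq n}$ denotes its elements $\sum_{i=0}^{n}a_i\tau^i$. A Drinfeld module $\bar\phi:\mathbb{F}_q[T]\to\mathbb{F}_{q^m}\{\tau\}$ is the $\mathbb{F}_q$-algebra homomorphism determined by $\bar\phi_T$; powers $\bar\phi_{T^R}^k$ are products in $\mathbb{F}_{q^m}\{\tau\}$. For $a\in\mathbb{F}_q[T]$, $\bar\phi[a]$ is the set of roots in $\overline{\mathbb{F}}_q$ of the $q$-linearized polynomial obtained from $\bar\phi_a$ by replacing $\tau^i$ with $x^{q^i}$. *)

(* Defs.v *)
From HB Require Import structures.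
From mathcomp Require Import all_boot all_order all_algebra all_field.
Set Implicit Arguments. Unset Strict Implicit. Unset Printing Implicit Defensive.
Import GRing.Theory.
Local Open Scope ring_scope.

(* Twisted polynomials  sum_i a_i tau^i  over a field L are represented by their
   coefficient vector, stored as an element of {poly L} (only the additive
   structure and the coefficients of {poly L} are used).  The multiplication is
   the twisted one: (a tau^i)(b tau^j) = a b^(q^i) tau^(i+j). *)
Section Twisted.
Variables (L : fieldType) (q : nat).

Definition tmul (f g : {poly L}) : {poly L} :=
  \poly_(k < (size f + size g).-1)
     \sum_(i < k.+1) f`_i * (g`_(k - i)) ^+ (q ^ i).

Definition tpow (f : {poly L}) (n : nat) : {poly L} := iter n (tmul f) 1.

Definition teval (f : {poly L}) (x : L) : L :=
  \sum_(i < size f) f`_i * x ^+ (q ^ i).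
End Twisted.

(* The Drinfeld module phi : F[T] -> L{tau}, the F-algebra homomorphism
   determined by phi_T = alpha + tau; F embeds into L via sigma. *)
Definition drinfeld (F : finFieldType) (L : fieldType) (sigma : {rmorphism F -> L})
  (alpha : L) (a : {poly F}) : {poly L} :=
  \sum_(j < size a) sigma a`_j *: tpow #|F| (alpha%:P + 'X) j.

(* Main.v *)
Require Import Defs.
From HB Require Import structures.
From mathcomp Require Import all_boot all_order all_algebra all_field.
Set Implicit Arguments. Unset Strict Implicit. Unset Printing Implicit Defensive.
Import GRing.Theory.
Local Open Scope ring_scope.

Section S.
Variables (F : finFieldType) (L : fieldType) (sigma : {rmorphism F -> L}).
Local Notation q := #|F|.
Implicit Types (f g : {poly L}) (x y : L).

Lemma q_gt1 : (1 < q)%N.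
Proof. exact: finNzRing_gt1. Qed.

Lemma q_pnat i : [pchar L].-nat (q ^ i)%N.
Proof.
have [p pr pc] := finPcharP F.
have := card_pprimeChar pc => /= Hc.
rewrite Hc -expnM pnatX pnatE //; apply/orP; left.
clear Hc; exact: (rmorph_pchar sigma pc).
Qed.

Lemma q_natr0 : (q%:R : L) = 0.
Proof.
have [p pr pc] := finPcharP F.
have pL : p \in [pchar L] := rmorph_pchar sigma pc.
have := card_pprimeChar pc => /= ->.
rewrite natrX (pcharf0 pL) expr0n /=.
case: (logn p q) (card_pprimeChar pc) => //= Hq.
by have := q_gt1; rewrite Hq.
Qed.

Lemma frobD i (x y : L) : (x + y) ^+ (q ^ i) = x ^+ (q ^ i) + y ^+ (q ^ i).
Proof. exact: exprDn_pchar (q_pnat i). Qed.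

Lemma q_exp_gt0 i : (0 < q ^ i)%N.
Proof. by rewrite expn_gt0 (ltn_trans _ q_gt1). Qed.

Lemma frob0 i : (0 : L) ^+ (q ^ i) = 0.
Proof. by rewrite expr0n eqn0Ngt q_exp_gt0. Qed.

Lemma frob_sum i n (G : 'I_n -> L) :
  (\sum_(j < n) G j) ^+ (q ^ i) = \sum_(j < n) (G j) ^+ (q ^ i).
Proof.
elim/big_rec2: _ => [|j y1 y2 _ <-]; first exact: frob0.
by rewrite frobD.
Qed.

Lemma sigma_frob i (c : F) : (sigma c) ^+ (q ^ i) = sigma c.
Proof.
rewrite -rmorphXn; congr (sigma _).
elim: i => [|i IH]; first by rewrite expn0 expr1.
by rewrite expnSr exprM IH expf_card.
Qed.

Lemma sum_wide (G : nat -> L) n N : (n <= N)%N -> (forall j, (n <= j)%N -> G j = 0) ->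
  \sum_(j < n) G j = \sum_(j < N) G j.
Proof.
move=> HnN HG; rewrite -(subnKC HnN) big_split_ord /= [X in _ = _ + X]big1 ?addr0 // => j _.
by apply: HG; rewrite leq_addr.
Qed.

Lemma teval_wide f x N : (size f <= N)%N ->
  teval q f x = \sum_(i < N) f`_i * x ^+ (q ^ i).
Proof.
move=> H; rewrite /teval; apply: (sum_wide (G := fun i => f`_i * x ^+ (q ^ i))) => // j Hj.
by rewrite nth_default ?mul0r // (leq_trans H).
Qed.

Lemma teval_add f g x : teval q (f + g) x = teval q f x + teval q g x.
Proof.
set N := maxn (size f) (size g).
rewrite !(@teval_wide _ _ N) ?leq_maxl ?leq_maxr ?(leq_trans (size_polyD _ _)) //.
by rewrite -big_split; apply: eq_bigr => i _; rewrite coefD mulrDl.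
Qed.

Lemma teval_scale c f x : teval q (c *: f) x = c * teval q f x.
Proof.
have H := size_scale_leq c f.
rewrite !(@teval_wide _ _ (size f)) // mulr_sumr.
by apply: eq_bigr => i _; rewrite coefZ mulrA.
Qed.

Lemma teval0 x : teval q 0 x = 0.
Proof. by rewrite /teval size_poly0 big_ord0. Qed.

Lemma teval_sum n (G : 'I_n -> {poly L}) x :
  teval q (\sum_(k < n) G k) x = \sum_(k < n) teval q (G k) x.
Proof.
elim/big_rec2: _ => [|j y1 y2 _ <-]; first exact: teval0.
by rewrite teval_add.
Qed.

Lemma teval_xadd f x y : teval q f (x + y) = teval q f x + teval q f y.
Proof.
by rewrite /teval -big_split; apply: eq_bigr => i _; rewrite frobD mulrDr.
Qed.

Lemma teval_xscale f (c : F) x : teval q f (sigma c * x) = sigma c * teval q f x.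
Proof.
rewrite /teval mulr_sumr; apply: eq_bigr => i _.
by rewrite exprMn sigma_frob mulrCA.
Qed.

Lemma teval_x0 f : teval q f 0 = 0.
Proof. by have := teval_xscale f 0 0; rewrite rmorph0 !mul0r. Qed.

Lemma teval1 x : teval q 1 x = x.
Proof. by rewrite /teval size_poly1 big_ord1 coef1 mul1r expn0 expr1. Qed.

Lemma coef_tmul f g k :
  (tmul q f g)`_k = \sum_(i < k.+1) f`_i * (g`_(k - i)) ^+ (q ^ i).
Proof.
rewrite /tmul coef_poly; case: ifP => // /negbT; rewrite -leqNgt => Hk.
rewrite big1 // => i _.
case: (ltnP i (size f)) => Hi; last by rewrite nth_default ?mul0r.
rewrite (@nth_default _ _ g) ?frob0 ?mulr0 //.
move: Hk Hi; case: (size f) => // n; rewrite addSn /= => Hk Hi.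
have Hin : (i <= n)%N by [].
rewrite leq_subRL; last by rewrite (leq_trans Hin) // (leq_trans _ Hk) // leq_addr.
by rewrite (leq_trans _ Hk) // leq_add2r.
Qed.

Lemma size_tmul f g : (size (tmul q f g) <= (size f + size g).-1)%N.
Proof. exact: size_poly. Qed.


Lemma tri_sum (G : nat -> nat -> L) N :
  \sum_(k < N) \sum_(i < k.+1) G i (k - i)%N = \sum_(i < N) \sum_(j < (N - i)%N) G i j.
Proof.
elim: N => [|N IH]; first by rewrite !big_ord0.
rewrite big_ord_recr /= IH [in RHS]big_ord_recr /= subSnn big_ord1.
rewrite [X in _ + X = _]big_ord_recr /= subnn addrA; congr (_ + _).
rewrite -big_split /=; apply: eq_bigr => i _.
by rewrite subSn ?(ltnW (ltn_ord i)) // big_ord_recr.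
Qed.

Lemma teval_tmul f g x : teval q (tmul q f g) x = teval q f (teval q g x).
Proof.
set N := (size f + size g)%N.
pose G i j := f`_i * (g`_j) ^+ (q ^ i) * x ^+ (q ^ (i + j)).
have -> : teval q (tmul q f g) x = \sum_(k < N) \sum_(i < k.+1) G i (k - i)%N.
  rewrite (@teval_wide _ _ N); last exact: leq_trans (size_tmul f g) (leq_pred _).
  apply: eq_bigr => k _; rewrite coef_tmul mulr_suml; apply: eq_bigr => i _.
  by rewrite /G subnKC // -ltnS.
have -> : teval q f (teval q g x) = \sum_(i < size f) \sum_(j < size g) G i j.
  rewrite /teval; apply: eq_bigr => i _; rewrite frob_sum mulr_sumr.
  rewrite /G; apply: eq_bigr => j _; by rewrite exprMn -exprM -expnD [(i + j)%N]addnC mulrA.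
rewrite tri_sum (@sum_wide (fun i => \sum_(j < size g) G i j) (size f) N).
- apply: eq_bigr => i _.
  case: (ltnP i (size f)) => Hi.
    apply/esym/sum_wide.
      by rewrite leq_subRL ?leq_add2r ?(ltnW Hi) // (leq_trans (ltnW Hi)) // leq_addr.
    by move=> j Hj; rewrite /G (nth_default _ Hj) frob0 mulr0 mul0r.
  by rewrite !big1 // => j _; rewrite /G nth_default // !mul0r.
- exact: leq_addr.
- by move=> i Hi; rewrite big1 // => j _; rewrite /G nth_default // !mul0r.
Qed.

Lemma teval_tpow f n x : teval q (tpow q f n) x = iter n (teval q f) x.
Proof.
elim: n => [|n IH]; first exact: teval1.
by rewrite /tpow iterS -/(tpow q f n) teval_tmul IH.
Qed.


Variable alpha : L.
Local Notation phiT := (alpha%:P + 'X).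
Local Notation Phi := (teval q phiT).

Lemma coef_tmul_phiT t k :
  (tmul q phiT t)`_k = alpha * t`_k + (if k is k'.+1 then t`_k' ^+ q else 0).
Proof.
rewrite coef_tmul; case: k => [|k].
  by rewrite big_ord1 coefD coefC coefX /= subn0 expn0 expr1 addr0 addr0.
rewrite big_ord_recl big_ord_recl big1 /=.
  by rewrite !coefD !coefC !coefX /= subn0 expn0 expn1 expr1 subSS subn0 !addr0 add0r mul1r.
move=> i _; rewrite coefD coefC coefX /=.
by rewrite addr0 mul0r.
Qed.

Lemma size_tpow j : (size (tpow q phiT j) <= j.+1)%N.
Proof.
elim: j => [|j IH]; first by rewrite /tpow /= size_poly1.
rewrite /tpow iterS -/(tpow q phiT j).
have H2 : size phiT = 2%N by rewrite addrC size_XaddC.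
apply: leq_trans (size_tmul _ _) _; rewrite H2.
by rewrite add2n /= ltnS.
Qed.

Lemma coef_tpow_top j : (tpow q phiT j)`_j = 1.
Proof.
elim: j => [|j IH]; first by rewrite /tpow /= coef1.
rewrite /tpow iterS -/(tpow q phiT j) coef_tmul_phiT IH expr1n.
by rewrite nth_default ?mulr0 ?add0r // size_tpow.
Qed.

Lemma coef_tpow0 j : (tpow q phiT j)`_0 = alpha ^+ j.
Proof.
elim: j => [|j IH]; first by rewrite /tpow /= coef1.
by rewrite /tpow iterS -/(tpow q phiT j) coef_tmul_phiT IH addr0 exprS.
Qed.


Implicit Types (p b : {poly F}).
Definition Ev p x := \sum_(j < size p) sigma p`_j * iter j Phi x.

Lemma teval_drinfeld p x : teval q (drinfeld sigma alpha p) x = Ev p x.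
Proof.
rewrite /drinfeld teval_sum; apply: eq_bigr => j _.
by rewrite teval_scale teval_tpow.
Qed.

Lemma iter_xadd j x y : iter j Phi (x + y) = iter j Phi x + iter j Phi y.
Proof. by rewrite -!teval_tpow teval_xadd. Qed.

Lemma iter_xscale j c x : iter j Phi (sigma c * x) = sigma c * iter j Phi x.
Proof. by rewrite -!teval_tpow teval_xscale. Qed.

Lemma Ev_wide p x N : (size p <= N)%N -> Ev p x = \sum_(j < N) sigma p`_j * iter j Phi x.
Proof.
move=> H; apply: (sum_wide (G := fun j => sigma p`_j * iter j Phi x)) => // j Hj.
by rewrite nth_default ?rmorph0 ?mul0r // (leq_trans H).
Qed.

Lemma Ev_add p b x : Ev (p + b) x = Ev p x + Ev b x.
Proof.
set N := maxn (size p) (size b).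
rewrite !(@Ev_wide _ _ N) ?leq_maxl ?leq_maxr ?(leq_trans (size_polyD _ _)) //.
by rewrite -big_split; apply: eq_bigr => i _; rewrite coefD rmorphD mulrDl.
Qed.

Lemma Ev_C c x : Ev c%:P x = sigma c * x.
Proof.
rewrite (@Ev_wide _ _ 1) ?size_polyC ?leq_b1 //.
by rewrite big_ord1 coefC.
Qed.

Lemma Ev_scale c p x : Ev (c *: p) x = sigma c * Ev p x.
Proof.
have H := size_scale_leq c p.
rewrite !(@Ev_wide _ _ (size p)) // mulr_sumr.
by apply: eq_bigr => i _; rewrite coefZ rmorphM mulrA.
Qed.

Lemma Ev_mulX p x : Ev (p * 'X) x = Ev p (Phi x).
Proof.
have H : (size (p * 'X)%R <= (size p).+1)%N.
  by have [->|/size_mulX ->] := eqVneq p 0; rewrite ?mul0r ?size_poly0.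
rewrite (@Ev_wide _ _ (size p).+1) // big_ord_recl coefMX /= rmorph0 mul0r add0r.
by apply: eq_bigr => j _; rewrite coefMX /= -iterSr.
Qed.

Lemma Ev_xadd p x y : Ev p (x + y) = Ev p x + Ev p y.
Proof. by rewrite /Ev -big_split; apply: eq_bigr => j _; rewrite iter_xadd mulrDr. Qed.

Lemma Ev_xscale p c x : Ev p (sigma c * x) = sigma c * Ev p x.
Proof. by rewrite /Ev mulr_sumr; apply: eq_bigr => j _; rewrite iter_xscale mulrCA. Qed.

Lemma Ev_x0 p : Ev p 0 = 0.
Proof. by have := Ev_xscale p 0 0; rewrite rmorph0 !mul0r. Qed.

Lemma Ev0 x : Ev 0 x = 0.
Proof. by rewrite /Ev size_poly0 big_ord0. Qed.

Lemma Ev_mul p b x : Ev (p * b) x = Ev p (Ev b x).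
Proof.
elim/poly_ind: b x => [|b c IH] x; first by rewrite mulr0 Ev0 Ev_x0.
rewrite mulrDr mulrA Ev_add Ev_mulX IH mulrC mul_polyC Ev_scale.
by rewrite Ev_add Ev_mulX Ev_C Ev_xadd Ev_xscale.
Qed.

Lemma coef_drinfeld p k :
  (drinfeld sigma alpha p)`_k = \sum_(j < size p) sigma p`_j * (tpow q phiT j)`_k.
Proof. by rewrite /drinfeld coef_sum; apply: eq_bigr => j _; rewrite coefZ. Qed.

Lemma drinfeld_coef0 p : (drinfeld sigma alpha p)`_0 = (map_poly sigma p).[alpha].
Proof.
rewrite coef_drinfeld horner_coef size_map_poly.
by apply: eq_bigr => j _; rewrite coef_map coef_tpow0.
Qed.

Lemma size_drinfeld p : (size (drinfeld sigma alpha p) <= size p)%N.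
Proof.
apply/leq_sizeP => k Hk; rewrite coef_drinfeld big1 // => j _.
by rewrite [X in _ * X]nth_default ?mulr0 // (leq_trans (size_tpow j)) // (leq_trans _ Hk).
Qed.

Lemma drinfeld_lead p : p != 0 ->
  (drinfeld sigma alpha p)`_(size p).-1 = sigma (lead_coef p).
Proof.
rewrite -size_poly_gt0 coef_drinfeld /lead_coef.
case: (size p) => // n _ /=.
rewrite big_ord_recr /= coef_tpow_top mulr1 big1 ?add0r // => j _.
by rewrite [X in _ * X]nth_default ?mulr0 // (leq_trans (size_tpow j)).
Qed.


Definition lin f N := \sum_(k < N) f`_k *: 'X^(q ^ k).

Lemma lin_eval f N x : (size f <= N)%N -> (lin f N).[x] = teval q f x.
Proof.
move=> H; rewrite (teval_wide x H) /lin horner_sum; apply: eq_bigr => k _.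
by rewrite hornerZ hornerXn.
Qed.

Lemma lin_coef f N j : (j < N)%N -> (lin f N)`_(q ^ j) = f`_j.
Proof.
move=> Hj; rewrite /lin coef_sum (bigD1 (Ordinal Hj)) //= coefZ coefXn eqxx mulr1.
rewrite big1 ?addr0 // => k Hk; rewrite coefZ coefXn eqn_exp2l ?q_gt1 //.
suff -> : (j == k) = false by rewrite mulr0.
apply/negbTE; apply: contra Hk => /eqP Ejk; apply/eqP/val_inj; by rewrite /= Ejk.
Qed.

Lemma lin_size f N : (size (lin f N.+1) <= (q ^ N).+1)%N.
Proof.
apply/leq_sizeP => i Hi; rewrite /lin coef_sum big1 // => k _.
rewrite coefZ coefXn; case: eqP => [Ei|]; last by rewrite mulr0.
by move: Hi; rewrite Ei ltnNge leq_exp2l ?q_gt1 // -ltnS ltn_ord.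
Qed.

Lemma lin_deriv f N : (lin f N.+1)^`() = (f`_0)%:P.
Proof.
rewrite /lin (big_morph _ (@derivD L) (@deriv0 L)) big_ord_recl big1 ?addr0.
  by rewrite derivZ derivXn expn0 /= expr0 mulr1n alg_polyC.
move=> k _; rewrite derivZ derivXn -mulr_natr -polyC_natr /= natrX q_natr0.
by rewrite expr0n /= mulr0 scaler0.
Qed.

End S.

Unset Implicit Arguments.
From mathcomp Require Import zify.
Theorem lemma3p3
  (F : finFieldType) (L : closedFieldType) (sigma : {rmorphism F -> L})
  (r delta l m s : nat) (a : 'I_l -> F) (P : {poly F}) (alpha : L)
  (g : nat -> {poly L}) :
  (1 <= r)%N -> (2 <= delta)%N ->
  injective a -> (forall i, a i != 0) ->
  P \is monic -> irreducible_poly P -> size P = m.+1 ->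
  (\prod_(i < l) ('X^(r + delta - 1) - (a i)%:P)) %| P - 1 ->
  root (map_poly sigma P) alpha ->
  (forall k, (k <= s)%N -> (size (g k) <= r)%N /\
     forall i, ((g k)`_i) ^+ (#|F| ^ m) = (g k)`_i) ->
  \sum_(k < s.+1) tmul #|F| (g k)
       (tpow #|F| (drinfeld sigma alpha 'X^(r + delta - 1)) k) != 0 ->
  (s.+1 <= l)%N ->
  exists x : L,
    teval #|F| (drinfeld sigma alpha (\prod_(i < l) ('X^(r + delta - 1) - (a i)%:P))) x = 0
    /\ teval #|F| (\sum_(k < s.+1) tmul #|F| (g k)
       (tpow #|F| (drinfeld sigma alpha 'X^(r + delta - 1)) k)) x != 0.
Proof.
move=> Hr Hd ainj anz Pmon Pirr Psz Hdvd Hroot Hg Hf Hsl.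
set R := (r + delta - 1)%N in Hdvd Hf *.
have HR : (r < R)%N by rewrite /R; lia.
set G := fun i : 'I_l => (\sum_(k < s.+1) (sigma (a i)) ^+ k *: g k) : {poly L}.
have [i Gi] : exists i, G i != 0.
  case: (boolP [exists i, G i != 0]) => [/existsP //|].
  rewrite negb_exists => /forallP HG0.
  have g0 : forall k, (k < s.+1)%N -> g k = 0.
    move=> k Hk; apply/polyP => j; rewrite coef0.
    pose Q := \poly_(k < s.+1) (g k)`_j : {poly L}.
    have HQ : Q = 0.
      apply: (@roots_geq_poly_eq0 _ Q [seq sigma (a i) | i <- enum 'I_l]).
      - apply/allP => z /mapP [i _ ->]; rewrite /root horner_poly.
        have := HG0 i; rewrite negbK => /eqP HGi.
        have := congr1 (fun p : {poly L} => p`_j) HGi.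
        rewrite coef0 => E; apply/eqP; apply: etrans _ E; rewrite /G coef_sum; apply: eq_bigr => k' _.
        by rewrite coefZ mulrC.
      - rewrite map_inj_uniq ?enum_uniq // => i1 i2 /fmorph_inj; exact: ainj.
      - rewrite size_map size_enum_ord; exact: leq_trans (size_poly _ _) Hsl.
    by have := congr1 (fun p : {poly L} => p`_k) HQ; rewrite coef_poly Hk coef0.
  case/negP: Hf; apply/eqP; apply: big1 => k _; rewrite g0 //.
  apply/polyP => j; rewrite coef_tmul coef0 big1 // => i _; by rewrite coef0 mul0r.
set c := sigma (a i).
set fct := ('X^R - (a i)%:P : {poly F}).
have R0 : (0 < R)%N by rewrite (leq_trans _ HR).
have He : (map_poly sigma fct).[alpha] != 0.
  apply/negP => /eqP He.
  case/dvdpP: Hdvd => u Hu.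
  have := congr1 (fun p => (map_poly sigma p).[alpha]) Hu => /=.
  rewrite rmorphB rmorph1 rmorphM /= hornerM hornerD hornerN hornerC.
  move/rootP: Hroot => ->.
  rewrite rmorph_prod horner_prod (bigD1 i) //= -/fct He mul0r mulr0 sub0r.
  by move/eqP; rewrite oppr_eq0 oner_eq0.
set d := drinfeld sigma alpha fct.
have szf : size fct = R.+1 by rewrite size_XnsubC.
have fct0 : fct != 0 by rewrite -size_poly_gt0 szf.
have sd : (size d <= R.+1)%N by rewrite -szf size_drinfeld.
have dR : d`_R = 1.
  by have := drinfeld_lead sigma alpha fct0; rewrite szf /= lead_coefXnsubC // rmorph1.
have d0 : d`_0 = (map_poly sigma fct).[alpha] by exact: drinfeld_coef0.
have sG : (size (G i) <= r)%N.
  apply/leq_sizeP => j Hj; rewrite /G coef_sum big1 // => k _.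
  have [Hk _] := Hg k (ltn_ord k).
  by rewrite coefZ nth_default ?mulr0 // (leq_trans Hk).
set A := lin F d R.+1.
set B := lin F (G i) r.
have Aeval : forall x, A.[x] = teval #|F| d x by move=> x; exact: lin_eval.
have Beval : forall x, B.[x] = teval #|F| (G i) x by move=> x; exact: lin_eval.
have AqR : A`_(#|F| ^ R) = 1 by rewrite lin_coef.
have A0 : A != 0 by apply/eqP => A0; move: AqR; rewrite A0 coef0 => /eqP; rewrite eq_sym oner_eq0.
have lcA : lead_coef A != 0 by rewrite lead_coef_eq0.
have [rs HA] := closed_field_poly_normal A.
have sepA : separable_poly A.
  rewrite unlock (lin_deriv sigma) d0 -alg_polyC coprimepZr //; exact: coprimep1.
have urs : uniq rs.
  by move: sepA; rewrite {1}HA (eqp_separable (eqp_scale _ lcA)) separable_prod_XsubC.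
case: (boolP (has (fun z => ~~ root B z) rs)).
  case/hasP => z zrs nrB; exists z.
  have Dz : teval #|F| d z = 0.
    by rewrite -Aeval; apply/rootP; rewrite HA rootZ // root_prod_XsubC.
  have Bz : teval #|F| (G i) z != 0 by rewrite -Beval.
  have Dz' : Ev sigma alpha fct z = 0 by rewrite -teval_drinfeld.
  split.
    rewrite teval_drinfeld (bigD1 i) //= mulrC Ev_mul -/fct Dz'.
    exact: Ev_x0.
  have EX : forall y, Ev sigma alpha 'X^R y = Ev sigma alpha fct y + c * y.
    by move=> y; rewrite -(Ev_C sigma alpha) -Ev_add subrK.
  have Hit : forall k, iter k (teval #|F| (drinfeld sigma alpha 'X^R)) z = sigma (a i ^+ k) * z.
    elim=> [|k IH]; first by rewrite rmorph1 mul1r.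
    rewrite iterS IH teval_drinfeld Ev_xscale EX Dz' add0r.
    by rewrite exprS rmorphM mulrA [sigma (a i) * _]mulrC.
  suff -> : teval #|F| (\sum_(k < s.+1) tmul #|F| (g k)
       (tpow #|F| (drinfeld sigma alpha 'X^R) k)) z = teval #|F| (G i) z by [].
  rewrite /G !teval_sum; apply: eq_bigr => k _.
  rewrite (teval_tmul sigma). have E := (teval_tpow sigma (drinfeld sigma alpha 'X^R) k z). rewrite E Hit. have E2 := teval_xscale sigma (g k) (a i ^+ k) z. by rewrite E2 teval_scale rmorphXn.
move/hasPn => Hall.
exfalso.
have allB : all (root B) rs by apply/allP => z /Hall /=; rewrite negbK.
have [Q HQ] := uniq_roots_prod_XsubC allB (etrans (uniq_rootsE rs) urs).
have Gi0 : (0 < size (G i))%N by rewrite size_poly_gt0.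
set j := (size (G i)).-1.
have Bj : B`_(#|F| ^ j) != 0.
  rewrite lin_coef; last by rewrite /j prednK.
  by rewrite -lead_coefE lead_coef_eq0.
have B0 : B != 0 by apply/eqP => B0; move: Bj; rewrite B0 coef0 eqxx.
have H1 : (size (\prod_(z <- rs) ('X - z%:P))%R <= size B)%N.
  by apply: dvdp_leq => //; rewrite HQ dvdp_mull.
have H2 : size A = size (\prod_(z <- rs) ('X - z%:P)).
  by rewrite {1}HA size_scale.
have H3 : (#|F| ^ R < size A)%N.
  by rewrite ltnNge; apply/negP => H; move: AqR; rewrite nth_default // => /eqP; rewrite eq_sym oner_eq0.
have H4 : (size B <= (#|F| ^ r.-1).+1)%N.
  by rewrite /B -{1}(prednK Hr); exact: lin_size.
have : (#|F| ^ R <= #|F| ^ r.-1)%N.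
  by rewrite -ltnS (leq_trans H3) // H2 (leq_trans H1).
rewrite leq_exp2l ?q_gt1 //; apply/negP; rewrite -ltnNge.
by apply: leq_ltn_trans HR; rewrite leq_pred.
Qed.
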